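(* Let $(b_k)_{k\ge1}$ be positive reals with $\sum_{k=1}^\infty k\,b_k=B^*<\infty$, and let $b_0>0$ be arbitrary. For every $K\ge1$, the multi-resolution LCMM with liquidity parameters $b_0,b_1,\dots,b_K$ has worst-case loss $$\sup_{\boldsymbol\theta\in\mathbb R^{\mathcal Z^*}}\ \sup_{\omega\in\Omega}\bigl[\boldsymbol\theta\cdot\boldsymbol\phi(\omega)-C(\boldsymbol\theta)+C(\mathbf 0)\bigr]\le B^*\log 2,$$ independently of $K$.
   Context: Fix an integer $K\ge1$, $N=2^K$, $\Omega=\{j/N:j=0,\dots,N-1\}$. Let $T^*$ be the complete binary tree of depth $K$ whose nodes are intervals: the root (level $0$) has $I_{\mathit{root}}=[0,1)$, and each node $z$ at level $k<K$ with $I_z=[\alpha_z,\beta_z)$ has children at level $k+1$ with intervals $[\alpha_z,\frac{\alpha_z+\beta_z}2)$ and $[\frac{\alpha_z+\beta_z}2,\beta_z)$. Let $\mathcal Z^*$ be its node set, $\mathcal Z_k$ the nodes at level $k$, $\mathrm{level}(z)$ the level of $z$, and $\mathcal Y^*=\mathcal Z^*\setminus\mathcal Z_K$. Each node $z$ indexes an interval security with payoff $\phi_z(\omega)=1\{\omega\in I_z\}$; $\boldsymbol\phi(\omega)=(\phi_z(\omega))_{z\in\mathcal Z^*}$. With liquidities $b_k>0$, set $B_\ell=\sum_{k=\ell+1}^K b_k$. For $\boldsymbol\theta\in\mathbb R^{\mathcal Z^*}$ let $C_k(\boldsymbol\theta_k)=b_k\log\sum_{z\in\mathcal Z_k}e^{\theta_z/b_k}$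 and $\tilde C(\boldsymbol\theta)=\sum_{k=0}^K C_k(\boldsymbol\theta_k)$. The constraint matrix $\mathbf A\in\mathbb R^{\mathcal Z^*\times\mathcal Y^*}$ has entries $A_{zy}=B_{\mathrm{level}(z)}$ if $z=y$, $-b_{\mathrm{level}(z)}$ if $I_z\subsetneq I_y$, and $0$ otherwise. The multi-resolution LCMM cost function is $C(\boldsymbol\theta)=\inf_{\boldsymbol\eta\in\mathbb R^{\mathcal Y^*}}\tilde C(\boldsymbol\theta+\mathbf A\boldsymbol\eta)$. *)

(* Defs.v *)
From HB Require Import structures.
From mathcomp Require Import all_boot all_order all_algebra.
From mathcomp Require Import all_classical all_reals all_analysis.
Set Implicit Arguments. Unset Strict Implicit. Unset Printing Implicit Defensive.
Import Order.TTheory GRing.Theory Num.Theory.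
Local Open Scope classical_set_scope.
Local Open Scope ring_scope.

(* Nodes of the complete binary tree T* of depth K are pairs (k, i) with
   k <= K (the level) and i < 2^k; node (k, i) has interval
   I_(k,i) = [i / 2^k, (i+1) / 2^k).  (This is exactly the recursive
   construction: children of (k,i) are (k+1,2i) and (k+1,2i+1).)
   Vectors indexed by nodes are represented as functions nat -> nat -> R;
   only entries at valid nodes are ever used. *)

Section LCMM.
Variable R : realType.

Definition alpha (k i : nat) : R := i%:R / (2 ^+ k).
Definition beta (k i : nat) : R := i.+1%:R / (2 ^+ k).

Definition omega (K j : nat) : R := j%:R / (2 ^+ K).

Definition phi (k i : nat) (w : R) : R :=
  ((alpha k i <= w) && (w < beta k i))%:R.

Definition strict_sub (kz iz ky iy : nat) : bool :=
  [&& alpha ky iy <= alpha kz iz, beta kz iz <= beta ky iy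
    & (alpha kz iz != alpha ky iy) || (beta kz iz != beta ky iy)].

Definition Bliq (b : nat -> R) (K l : nat) : R := \sum_(l.+1 <= k < K.+1) b k.

Definition Amat (b : nat -> R) (K kz iz ky iy : nat) : R :=
  if (kz == ky) && (iz == iy) then Bliq b K kz
  else if strict_sub kz iz ky iy then - b kz else 0.

Definition Amul (b : nat -> R) (K : nat) (eta : nat -> nat -> R)
  (kz iz : nat) : R :=
  \sum_(ky < K) \sum_(iy < 2 ^ ky) Amat b K kz iz ky iy * eta ky iy.

Definition Ck (b : nat -> R) (k : nat) (theta : nat -> nat -> R) : R :=
  b k * ln (\sum_(i < 2 ^ k) expR (theta k i / b k)).

Definition Ctilde (b : nat -> R) (K : nat) (theta : nat -> nat -> R) : R :=
  \sum_(k < K.+1) Ck b k theta.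

Definition Ccost (b : nat -> R) (K : nat) (theta : nat -> nat -> R) : R :=
  inf [set Ctilde b K (fun k i => theta k i + Amul b K eta k i)
      | eta in [set: nat -> nat -> R]].

Definition dotphi (K : nat) (theta : nat -> nat -> R) (w : R) : R :=
  \sum_(k < K.+1) \sum_(i < 2 ^ k) theta k i * phi k i w.

End LCMM.

(* Main.v *)
Require Import Defs.
From HB Require Import structures.
From mathcomp Require Import all_boot all_order all_algebra.
From mathcomp Require Import all_classical all_reals all_analysis.
From mathcomp Require Import ring lra zify.
Import Order.TTheory GRing.Theory Num.Theory.
Import numFieldNormedType.Exports.
Local Open Scope classical_set_scope.
Local Open Scope ring_scope.

Section Aux.
Variable R : realType.
Variable K : nat.

Lemma scaleE (k i : nat) : (k <= K)%N ->
  (i%:R / 2 ^+ k : R) = (i * 2 ^ (K - k))%:R / 2 ^+ K.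
Proof.
move=> hk; rewrite -{2}(subnKC hk) exprD natrM natrX.
have h1 : (2 ^+ k : R) != 0 by rewrite expf_neq0 // pnatr_eq0.
have h2 : (2 ^+ (K - k) : R) != 0 by rewrite expf_neq0 // pnatr_eq0.
by field; apply/andP.
Qed.

Lemma lecmp (x y : nat) : (x%:R / 2 ^+ K <= y%:R / 2 ^+ K :> R) = (x <= y)%N.
Proof. by rewrite ler_pM2r ?ler_nat // invr_gt0 exprn_gt0. Qed.

Lemma ltcmp (x y : nat) : (x%:R / 2 ^+ K < y%:R / 2 ^+ K :> R) = (x < y)%N.
Proof. by rewrite ltr_pM2r ?ltr_nat // invr_gt0 exprn_gt0. Qed.

Lemma eqcmp (x y : nat) : (x%:R / 2 ^+ K == y%:R / 2 ^+ K :> R) = (x == y).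
Proof. by rewrite eq_le !lecmp -eqn_leq. Qed.

Lemma divP (i j P : nat) : (0 < P)%N ->
  (i * P <= j)%N && (j < i.+1 * P)%N = (i == (j %/ P)%N).
Proof.
move=> hP; rewrite eqn_leq leq_divRL //.
by rewrite (_ : (j %/ P <= i)%N = (j %/ P < i.+1)%N) // ltn_divLR.
Qed.

Variable j : 'I_(2 ^ K).
Definition w : R := omega R K j.
Definition i0 (k : nat) : nat := (j %/ 2 ^ (K - k))%N.

Lemma i0_lt k : (k <= K)%N -> (i0 k < 2 ^ k)%N.
Proof.
by move=> hk; rewrite /i0 ltn_divLR ?expn_gt0 // -expnD subnKC.
Qed.

Lemma phiE k i : (k <= K)%N -> phi k i w = (i == i0 k)%:R.
Proof.
move=> hk; rewrite /phi /alpha /beta /w /omega !(scaleE k _ hk) lecmp ltcmp.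
by rewrite divP ?expn_gt0.
Qed.

Lemma dotphiE x : dotphi K x w = \sum_(k < K.+1) x k (i0 k).
Proof.
apply: eq_bigr => k _.
have hk : (k <= K)%N by rewrite -ltnS.
rewrite (bigD1 (Ordinal (i0_lt k hk))) //= phiE // eqxx mulr1 big1 ?addr0 //.
by move=> i hi; rewrite phiE // -val_eqE /= in hi *; rewrite (negbTE hi) mulr0.
Qed.


Lemma strict_subE k ky iy : (k <= K)%N -> (ky <= K)%N ->
  strict_sub R k (i0 k) ky iy = (ky < k)%N && (iy == i0 ky).
Proof.
move=> hk hky.
rewrite /strict_sub /alpha /beta !(scaleE k _ hk) !(scaleE ky _ hky).
rewrite !lecmp !eqcmp /i0.
set P := (2 ^ (K - k))%N; set Q := (2 ^ (K - ky))%N; set m := (j %/ P)%N.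
have hP : (0 < P)%N by rewrite expn_gt0.
have hQ : (0 < Q)%N by rewrite expn_gt0.
have hm1 : (m * P <= j)%N by apply: leq_trunc_div.
have hm2 : (j < m.+1 * P)%N by apply: ltn_ceil.
apply/idP/idP.
- move=> /and3P [h1 h2 h3].
  have hiy : iy == (j %/ Q)%N.
    rewrite -divP //; apply/andP; split; first exact: leq_trans h1 hm1.
    exact: leq_trans hm2 h2.
  rewrite hiy andbT ltnNge; apply/negP => hkk.
  have hPQ : (Q <= P)%N by rewrite leq_exp2l // leq_sub2l.
  have hQP : (P <= Q)%N.
    move: h1 h2; rewrite !mulSnr => h1 h2.
    rewrite -(leq_add2l (m * P)); apply: leq_trans h2 _.
    by rewrite leq_add2r.
  have ePQ : P = Q by apply/eqP; rewrite eqn_leq hQP hPQ.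
  move: h3; rewrite (eqP hiy) -/Q -ePQ -/m.
  by rewrite !eqxx.
- move=> /andP [hlt /eqP ->].
  set D := (2 ^ (k - ky))%N.
  have eQ : Q = (P * D)%N by rewrite /Q /P /D -expnD (_ : (K - ky = (K - k) + (k - ky))%N) //; lia.
  have hD : (1 < D)%N by rewrite /D -{1}(expn0 2) ltn_exp2l // subn_gt0.
  have ediv : (j %/ Q)%N = (m %/ D)%N by rewrite eQ divnMA.
  rewrite ediv eQ.
  set n := (m %/ D)%N.
  have hn1 : (n * D <= m)%N by apply: leq_trunc_div.
  have hn2 : (m < n.+1 * D)%N by apply: ltn_ceil; exact: ltnW.
  apply/and3P; split.
  + by rewrite (mulnC P D) mulnA leq_mul2r hn1 orbT.
  + by rewrite (mulnC P D) mulnA leq_mul2r hn2 orbT.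
  + case E: (m * P == n * (P * D))%N => //=.
    rewrite !mulSnr (eqP E) eqn_add2l.
    by rewrite ltn_eqF // ltn_Pmulr.
Qed.

Lemma Asum0 b ky iy : (ky < K)%N ->
  \sum_(k < K.+1) Amat b K k (i0 k) ky iy = 0 :> R.
Proof.
move=> hky.
have ->: \sum_(k < K.+1) Amat b K k (i0 k) ky iy =
    \sum_(k < K.+1) (if ((k : nat) == ky) && (iy == i0 ky) then Bliq b K ky
       else if (ky < k)%N && (iy == i0 ky) then - b k else 0).
  apply: eq_bigr => k _.
  have hk : (k <= K)%N by rewrite -ltnS.
  rewrite /Amat strict_subE //; last exact: ltnW.
  case: (eqVneq (k : nat) ky) => [->|] //=; by rewrite eq_sym.
case: (eqVneq iy (i0 ky)) => hiy; last by rewrite big1 // => k _; rewrite !andbF.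
under eq_bigr do rewrite !andbT.
rewrite -(big_mkord xpredT (fun k => if k == ky then Bliq b K ky
       else if (ky < k)%N then - b k else 0)).
rewrite (@big_cat_nat _ _ _ ky) //=; last by rewrite ltnW // ltnW.
rewrite [X in _ + X]big_ltn; last exact: ltnW.
rewrite big_nat_cond big1; last first.
  by move=> k /andP [/andP [_ hk] _]; rewrite (ltn_eqF hk) ltnNge ltnW.
rewrite eqxx /= add0r /Bliq -big_split /=.
rewrite big_nat_cond big1 // => k /andP [/andP [hk _] _].
by rewrite hk gtn_eqF // subrr.
Qed.

Lemma dotA b eta : dotphi K (Amul b K eta) w = 0 :> R.
Proof.
rewrite dotphiE /Amul exchange_big /= big1 // => ky _.
rewrite exchange_big /= big1 // => iy _.
by rewrite -mulr_suml Asum0 ?mul0r.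
Qed.

End Aux.

Lemma dotphi_add (R : realType) K (x y : nat -> nat -> R) v :
  dotphi K (fun k i => x k i + y k i) v = dotphi K x v + dotphi K y v.
Proof.
rewrite /dotphi -big_split; apply: eq_bigr => k _.
rewrite -big_split; apply: eq_bigr => i _; by rewrite mulrDl.
Qed.

Lemma lower (R : realType) K (j : 'I_(2 ^ K)) (b : nat -> R)
  (hb : forall k, 0 < b k) x :
  dotphi K x (@w R K j) <= Ctilde b K x.
Proof.
rewrite dotphiE /Ctilde; apply: ler_sum => k _; rewrite /Ck.
have hk : (k <= K)%N by rewrite -ltnS.
set t := x k (i0 K j k).
have hs : expR (t / b k) <= \sum_(i < 2 ^ k) expR (x k i / b k).
  rewrite (bigD1 (Ordinal (@i0_lt K j k hk))) //= lerDl.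
  by apply: sumr_ge0 => i _; exact: expR_ge0.
have hpos : 0 < \sum_(i < 2 ^ k) expR (x k i / b k) by apply: lt_le_trans hs; exact: expR_gt0.
rewrite -ler_pdivrMl // mulrC -{1}(expRK (t / b k)).
by rewrite ler_ln ?posrE ?expR_gt0.
Qed.

Lemma lbE (R : realType) K (j : 'I_(2 ^ K)) (b : nat -> R)
  (hb : forall k, 0 < b k) theta :
  lbound [set Ctilde b K (fun k i => theta k i + Amul b K eta k i)
      | eta in [set: nat -> nat -> R]] (dotphi K theta (@w R K j)).
Proof.
move=> y [eta _ <-].
rewrite -(addr0 (dotphi K theta _)) -(@dotA R K j b eta) -dotphi_add.
exact: lower.
Qed.

Lemma LB (R : realType) K (j : 'I_(2 ^ K)) (b : nat -> R)
  (hb : forall k, 0 < b k) theta :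
  dotphi K theta (@w R K j) <= Ccost b K theta.
Proof.
apply: lb_le_inf; last exact: lbE.
by exists (Ctilde b K (fun k i => theta k i + Amul b K (fun _ _ => 0) k i)), (fun _ _ => 0).
Qed.

Lemma UB (R : realType) K (j : 'I_(2 ^ K)) (b : nat -> R)
  (hb : forall k, 0 < b k) :
  Ccost b K (fun _ _ => 0) <= \sum_(k < K.+1) (k%:R * b k) * ln 2.
Proof.
have hl := @lbE R K j b hb (fun _ _ => 0).
have h := ge_inf (ex_intro _ _ hl).
apply: (@le_trans _ _ (Ctilde b K (fun k i => 0 + Amul b K (fun _ _ => 0) k i))).
  by apply: h; exists (fun _ _ => 0).
rewrite /Ctilde; apply: ler_sum => k _ /=; rewrite /Ck.
have -> : \sum_(i < 2 ^ k) expR ((0 + Amul b K (fun _ _ => 0) k i) / b k) = (2 ^+ k : R).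
  rewrite (eq_bigr (fun _ => 1)); last first.
    move=> i _; rewrite /Amul big1 ?add0r ?mul0r ?expR0 // => ky _.
    by rewrite big1 // => iy _; rewrite mulr0.
  by rewrite sumr_const card_ord -natrX.
rewrite lnXn // -mulr_natr.
by rewrite le_eqVlt; apply/orP; left; apply/eqP; ring.
Qed.

Theorem theorem4 (R : realType) (b : nat -> R) (Bstar : R)
  (hb : forall k, 0 < b k)
  (hB : series (fun k => k%:R * b k) @ \oo --> Bstar)
  (K : nat) (hK : (1 <= K)%N)
  (theta : nat -> nat -> R) (j : 'I_(2 ^ K)) :
  dotphi K theta (omega R K j) - Ccost b K theta
    + Ccost b K (fun _ _ => 0) <= Bstar * ln 2.
Proof.
have h1 := @LB R K j b hb theta.
have h2 := @UB R K j b hb.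
have h3 : \sum_(k < K.+1) (k%:R * b k) <= Bstar.
  have hom : {homo series (fun k => k%:R * b k) : n m / (n <= m)%N >-> n <= m}.
    apply: (@nondecreasing_series _ _ xpredT 0) => n _ _.
    by rewrite mulr_ge0 // ltW.
  have := nondecreasing_cvgn_le hom (cvgP _ hB) K.+1.
  by rewrite (cvg_lim (@Rhausdorff R) hB) /series /= big_mkord.
have hl : 0 <= ln (2 : R) by rewrite ln_ge0 // ler1n.
rewrite -mulr_suml in h2.
have h4 := ler_wpM2r hl h3.
move: h1; rewrite /w => h1.
lra.
Qed.
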